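(* Let $I$ be a nearly complete intersection in $R=k[x_1,\dots,x_n]$, let $h$ be a minimal monomial generator of $I$ with $\deg(h)\ge 3$, and let $K$ be the ideal generated by the remaining minimal monomial generators of $I$, so $I=K+(h)$. Then $\operatorname{pdim}(I)\le \operatorname{pdim}(K)+1$.
   Context: $k$ is a field; $\operatorname{pdim}$ denotes projective dimension of an ideal as an $R$-module. A nearly complete intersection is a squarefree monomial ideal $I$ that is not a complete intersection such that for every variable $x$ dividing some generator of $I$, the ideal $I(x=1)$ obtained by substituting $x=1$ in the generators is a complete intersection. *)

(* Defs.v *)
From HB Require Import structures.
From mathcomp Require Import all_boot all_order all_algebra.
From mathcomp Require Import mpoly.
Set Implicit Arguments. Unset Strict Implicit. Unset Printing Implicit Defensive.
Import GRing.Theory.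
Local Open Scope ring_scope.

Definition mdivides (n : nat) (m m' : 'X_{1..n}) : bool :=
  [forall i : 'I_n, (m i <= m' i)%N].

Definition mcoprime (n : nat) (m m' : 'X_{1..n}) : bool :=
  [forall i : 'I_n, (m i == 0%N) || (m' i == 0%N)].

Definition msquarefree (n : nat) (m : 'X_{1..n}) : bool :=
  [forall i : 'I_n, (m i <= 1)%N].

Definition mon_ideal (k : fieldType) (n : nat) (G : seq 'X_{1..n})
    (f : {mpoly k[n]}) : Prop :=
  exists c : 'X_{1..n} -> {mpoly k[n]}, f = \sum_(g <- G) c g * 'X_[g].

Definition min_gens (n : nat) (G : seq 'X_{1..n}) : seq 'X_{1..n} :=
  undup [seq m <- G | ~~ has (fun m' => (m' != m) && mdivides m' m) G].

Definition is_min_gen_set (n : nat) (G : seq 'X_{1..n}) : bool :=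
  uniq G && all (fun m => ~~ has (fun m' => (m' != m) && mdivides m' m) G) G.

(** a monomial ideal is a complete intersection: its minimal monomial
    generators form a regular sequence, i.e. are pairwise coprime *)
Definition mon_CI (n : nat) (G : seq 'X_{1..n}) : bool :=
  let M := min_gens G in
  all (fun m => all (fun m' => (m == m') || mcoprime m m') M) M.

Definition set_var1 (n : nat) (i : 'I_n) (m : 'X_{1..n}) : 'X_{1..n} :=
  [multinom (if j == i then 0%N else m j) | j < n].

Definition nearly_CI (n : nat) (G : seq 'X_{1..n}) : Prop :=
  all (@msquarefree n) G /\ ~~ mon_CI G /\
  forall i : 'I_n, has (fun g : 'X_{1..n} => (0 < g i)%N) G ->
    mon_CI (map (set_var1 i) G).

(** M (here an ideal I of R, given as a predicate) has a finite free
    resolution of length <= L: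
      0 -> R^{b L} -d(L-1)-> ... -> R^{b 1} -d 0-> R^{b 0} -g-> I -> 0
    (maps act on row vectors by right multiplication). *)
Definition free_res_le (k : fieldType) (n : nat)
    (I : {mpoly k[n]} -> Prop) (L : nat) : Prop :=
  exists (b : nat -> nat) (g : 'cV[{mpoly k[n]}]_(b 0%N))
         (d : forall i : nat, 'M[{mpoly k[n]}]_(b i.+1, b i)),
    (forall i : nat, (L < i)%N -> b i = 0%N) /\
    (forall f, I f <-> exists v : 'rV_(b 0%N), f = (v *m g) 0 0) /\
    (forall v : 'rV_(b 0%N), v *m g = 0 <-> exists w, v = w *m d 0%N) /\
    (forall (i : nat) (v : 'rV_(b i.+1)),
        v *m d i = 0 <-> exists w, v = w *m d i.+1).

(** pdim(I) <= L  (pdim = least length of a projective = free resolution) *)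
Definition pdim_le (k : fieldType) (n : nat)
    (I : {mpoly k[n]} -> Prop) (L : nat) : Prop := free_res_le I L.

(* Main.v *)
Require Import Defs.
From HB Require Import structures.
From mathcomp Require Import all_boot all_order all_algebra.
From mathcomp Require Import mpoly.
From Stdlib Require Import ClassicalEpsilon.
Set Implicit Arguments. Unset Strict Implicit. Unset Printing Implicit Defensive.
Import GRing.Theory.
Local Open Scope ring_scope.
Definition Bof (b : nat -> nat) (i : nat) : nat :=
  match i with 0 => 1%N | S j => b j end.

Definition exact_all (T : comNzRingType) (b : nat -> nat)
  (D : forall i, 'M[T]_(Bof b i.+1, Bof b i)) : Prop :=
  forall i (v : 'rV_(Bof b i.+1)), v *m D i = 0 <-> exists w, v = w *m D i.+1.

Definition cres (T : comNzRingType) (I : T -> Prop) (L : nat) : Prop :=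
  exists (b : nat -> nat) (D : forall i, 'M[T]_(Bof b i.+1, Bof b i)),
    (forall i, (L < i)%N -> b i = 0%N) /\
    (forall f, I f <-> exists v : 'rV_(Bof b 1), f = (v *m D 0%N) 0 0) /\
    exact_all D.

Lemma free_cres (k : fieldType) (n : nat) (I : {mpoly k[n]} -> Prop) L :
  free_res_le I L <-> cres I L.
Proof.
split.
  case=> b [g [d [hb [hI [h0 hS]]]]].
  exists b, (fun i => match i as i0 return 'M_(Bof b i0.+1, Bof b i0) with
                      | 0 => g | S j => d j end).
  by split=> //; split=> // [[|i]] v /=.
case=> b [D [hb [hI hE]]].
exists b, (D 0%N), (fun j => D j.+1); split=> //; split=> //; split.
  by move=> v; apply: (hE 0%N).
by move=> i v; apply: (hE i.+1).
Qed.

Lemma cres_ext (T : comNzRingType) (I J : T -> Prop) L :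
  (forall f, I f <-> J f) -> cres I L -> cres J L.
Proof.
move=> hIJ [b [D [hb [hI hE]]]]; exists b, D; split=> //; split=> // f.
by rewrite -hI hIJ.
Qed.

Lemma exact_comp (T : comNzRingType) (b : nat -> nat)
  (D : forall i, 'M[T]_(Bof b i.+1, Bof b i)) :
  exact_all D -> forall i, D i.+1 *m D i = 0.
Proof.
move=> hE i; apply/row_matrixP => j; rewrite row_mul row0.
by apply/(hE i); exists (delta_mx 0 j); rewrite -rowE.
Qed.

Lemma lift_exists (T : nzRingType) p q r (M : 'M[T]_(p, r)) (D : 'M[T]_(q, r)) :
  (forall j, exists w : 'rV_q, row j M = w *m D) -> exists N, M = N *m D.
Proof.
move=> h; have [f hf] := fin_all_exists h.
exists (\matrix_j (f j)); apply/row_matrixP=> j.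
by rewrite row_mul rowK hf.
Qed.

Definition mlift (T : nzRingType) p q r (D : 'M[T]_(q, r)) (M : 'M[T]_(p, r)) : 'M[T]_(p, q) :=
  epsilon (inhabits 0) (fun N => M = N *m D).

Lemma mlift_spec (T : nzRingType) p q r (D : 'M[T]_(q, r)) (M : 'M[T]_(p, r)) :
  (exists N, M = N *m D) -> M = mlift D M *m D.
Proof. by move=> h; apply: (epsilon_spec (inhabits 0) _ h). Qed.

Lemma m11P (T : nzRingType) (A B : 'M[T]_1) : A 0 0 = B 0 0 -> A = B.
Proof. by move=> h; apply/matrixP=> i j; rewrite !ord1. Qed.

Lemma entry_sc (T : comNzRingType) p (v : 'rV[T]_p) (g : 'cV[T]_p) (c : 'rV[T]_1) x :
  (v *m g + c *m x%:M) 0 0 = (v *m g) 0 0 + c 0 0 * x.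
Proof.
rewrite mxE mul_mx_scalar. rewrite [in RHS]mulrC. congr (_ + _). rewrite mxE. done.
Qed.

Lemma cone (T : comNzRingType) (K J I : T -> Prop) (hX : T) L :
  cres K L -> cres J L ->
  (forall p, J p -> K (p * hX)) ->
  (forall r, K (r * hX) -> J r) ->
  (forall f, I f <-> exists a r, K a /\ f = a + r * hX) ->
  cres I L.+1.
Proof.
move=> [b [D [hb [hK hE]]]] [b' [D' [hb' [hJ hE']]]] hJK hKJ hI.
have hC := exact_comp hE; have hC' := exact_comp hE'.
pose A := fix A (i : nat) : 'M[T]_(Bof b' i.+1, Bof b i.+1) :=
  match i with
  | 0 => mlift (D 0%N) (D' 0%N *m hX%:M)
  | S j => mlift (D j.+1) (D' j.+1 *m A j) end.
have hA0 : D' 0%N *m hX%:M = A 0%N *m D 0%N.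
  apply: mlift_spec; apply: lift_exists => j.
  have hj : J (D' 0%N j 0).
    by apply/hJ; exists (delta_mx 0 j); rewrite -rowE mxE.
  have [w hw] := (hK _).1 (hJK _ hj); exists w; apply: m11P.
  by rewrite -hw mul_mx_scalar !mxE mulrC.
have hAS : forall j, D' j.+1 *m A j = A j.+1 *m D j.+1.
  have key : forall j, D' j.+1 *m A j *m D j = 0.
    elim=> [|j IH].
      by rewrite -mulmxA -hA0 mulmxA hC' mul0mx.
    have e : D' j.+1 *m A j = A j.+1 *m D j.+1.
      apply: mlift_spec; apply: lift_exists => l.
      by apply/(hE j); rewrite -row_mul IH row0.
    by rewrite -mulmxA -e mulmxA hC' mul0mx.
  move=> j; apply: mlift_spec; apply: lift_exists => l.
  by apply/(hE j); rewrite -row_mul key row0.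
pose b'' := fun i => (Bof b i.+1 + Bof b' i)%N.
pose D'' := fun i => match i as i0 return 'M[T]_(Bof b'' i0.+1, Bof b'' i0) with
  | 0 => col_mx (D 0%N) hX%:M
  | S j => block_mx (D j.+1) 0 (A j) (- D' j) end.
exists b'', D''; split.
  move=> [|i] //= hi; rewrite /b'' /= hb //; last by apply: ltnW.
  by rewrite hb'.
split.
  move=> f; rewrite hI; split.
    case=> a [r [/hK [v ->] ->]].
    exists (row_mx v (r%:M)) => /=.
    rewrite mul_row_col entry_sc; congr (_ + _ * _).
    by rewrite mxE eqxx mulr1n.
  case=> v ->; rewrite -{1}[v]hsubmxK mul_row_col.
  exists ((lsubmx v *m D 0%N) 0 0), (rsubmx v 0 0); split.
    by apply/hK; exists (lsubmx v).
  by rewrite entry_sc.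
move=> [|j] v /=.
  split.
    rewrite -[v]hsubmxK mul_row_col => h0.
    set v1 := lsubmx v in h0 *; set v2 := rsubmx v in h0 *.
    have h0' : v2 *m hX%:M = - (v1 *m D 0%N).
      by apply/eqP; rewrite -addr_eq0 addrC h0.
    have hr : K (v2 0 0 * hX).
      by apply/hK; exists (- v1); rewrite mulNmx -h0' mul_mx_scalar [RHS]mxE mulrC.
    have [y hy] := (hJ _).1 (hKJ _ hr).
    have ev2 : v2 = y *m D' 0%N by apply: m11P.
    have : (v1 + y *m A 0%N) *m D 0%N = 0.
      by rewrite mulmxDl -mulmxA -hA0 mulmxA -ev2.
    case/(hE 0%N) => z hz.
    exists (row_mx z (- y)).
    rewrite mul_row_block mulmx0 add0r !mulNmx mulmxN opprK -ev2 -hz.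
    by rewrite addrK.
  case=> w ->; rewrite -mulmxA mul_block_col mul0mx addr0 hC mulNmx -hA0.
  by rewrite addrN col_mx0 mulmx0.
split.
  rewrite -[v]hsubmxK mul_row_block mulmx0 add0r mulmxN => h0.
  set w1 := lsubmx v in h0 *; set w2 := rsubmx v in h0 *.
  have := eq_row_mx (etrans h0 (esym (row_mx0 _ _ _ _))).
  case=> h1 /eqP; rewrite oppr_eq0 => /eqP /(hE' j) [z2 ez2].
  have : (w1 + z2 *m A j.+1) *m D j.+1 = 0.
    by rewrite mulmxDl -mulmxA -hAS mulmxA -ez2.
  case/(hE j.+1) => z1 hz1.
  exists (row_mx z1 (- z2)).
  rewrite mul_row_block mulmx0 add0r !mulNmx mulmxN opprK -ez2 -hz1.
  by rewrite addrK.
case=> w ->; rewrite -mulmxA mulmx_block !mulmx0 !mul0mx !addr0 !add0r.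
rewrite !hC mulNmx mulmxN mulNmx opprK hC' -(hAS j) addrN.
by rewrite block_mx0 mulmx0.
Qed.

Definition monI (k : fieldType) (n : nat) (S : seq 'X_{1..n}) (f : {mpoly k[n]}) : Prop :=
  forall u, u \in msupp f -> has (fun g => (g <= u)%MM) S.

Lemma monI0 (k : fieldType) n (S : seq 'X_{1..n}) : monI S (0 : {mpoly k[n]}).
Proof. by move=> u; rewrite msupp0. Qed.

Lemma monID (k : fieldType) n (S : seq 'X_{1..n}) (p q : {mpoly k[n]}) :
  monI S p -> monI S q -> monI S (p + q).
Proof.
by move=> hp hq u /msuppD_le; rewrite mem_cat => /orP [/hp|/hq].
Qed.

Lemma monIN (k : fieldType) n (S : seq 'X_{1..n}) (p : {mpoly k[n]}) :
  monI S p -> monI S (- p).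
Proof. by move=> hp u; rewrite (perm_mem (msuppN p)); apply: hp. Qed.

Lemma monIM (k : fieldType) n (S : seq 'X_{1..n}) (r p : {mpoly k[n]}) :
  monI S p -> monI S (r * p).
Proof.
move=> hp u /msuppM_le /allpairsP [[m1 m2] /= [_ h2 ->]].
apply/(sub_has _ (hp _ h2)) => g /= hg.
by apply: lepm_trans hg _; rewrite addmC lem_addr.
Qed.

Lemma monI_sum (k : fieldType) n (S : seq 'X_{1..n}) (I : Type) (r : seq I)
    (F : I -> {mpoly k[n]}) :
  (forall i, monI S (F i)) -> monI S (\sum_(i <- r) F i).
Proof.
move=> hF; elim: r => [|a r IH]; first by rewrite big_nil; apply: monI0.
by rewrite big_cons; apply: monID.
Qed.

Lemma monIX (k : fieldType) n (S : seq 'X_{1..n}) (c : k) (u : 'X_{1..n}) :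
  has (fun g => (g <= u)%MM) S -> monI S (c *: 'X_[u] : {mpoly k[n]}).
Proof.
move=> hu v /msuppZ_le; rewrite msuppX mem_seq1 => /eqP ->; exact: hu.
Qed.

Lemma monIXM (k : fieldType) n (S : seq 'X_{1..n}) (c : {mpoly k[n]}) (g : 'X_{1..n}) :
  g \in S -> monI S (c * 'X_[g]).
Proof.
move=> hg u; rewrite (perm_mem (msuppMX _ _)) => /mapP [m' _ ->].
by apply/hasP; exists g => //; apply: lem_addr.
Qed.

Lemma monI_ind (k : fieldType) n (S : seq 'X_{1..n}) (P : {mpoly k[n]} -> Prop) :
  P 0 -> (forall p q, P p -> P q -> P (p + q)) ->
  (forall c u, has (fun g => (g <= u)%MM) S -> P (c *: 'X_[u])) ->
  forall f, monI S f -> P f.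
Proof.
move=> h0 hD hX; elim/mpolyind => [//|c m p mp cn0 IH] hf.
apply: hD; last first.
  apply: IH => u hu; apply: hf; rewrite mcoeff_msupp mcoeffD mcoeffZ mcoeffX.
  have -> : (m == u) = false.
    by apply/negbTE; apply: contraNneq mp => ->.
  by rewrite mulr0 add0r -mcoeff_msupp.
apply: hX; apply: hf; rewrite mcoeff_msupp mcoeffD mcoeffZ mcoeffX eqxx mulr1.
by rewrite (memN_msupp_eq0 mp) addr0.
Qed.

Lemma mon_ideal_monI (k : fieldType) n (S : seq 'X_{1..n}) (f : {mpoly k[n]}) :
  mon_ideal S f -> monI S f.
Proof.
case=> c ->.
have key : forall T, {subset T <= S} -> monI S (\sum_(g <- T) c g * 'X_[g]).
  elim=> [|g T IH] hS; first by rewrite big_nil; apply: monI0.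
  rewrite big_cons; apply: monID.
    by apply: monIXM; apply: hS; rewrite inE eqxx.
  by apply: IH => x hx; apply: hS; rewrite inE hx orbT.
exact: key.
Qed.

Lemma monI_mon_ideal (k : fieldType) n (S : seq 'X_{1..n}) (f : {mpoly k[n]}) :
  uniq S -> monI S f -> mon_ideal S f.
Proof.
move=> uS; apply: monI_ind.
- by exists (fun _ => 0); rewrite big1 // => g _; rewrite mul0r.
- move=> p q [c1 ->] [c2 ->]; exists (fun g => c1 g + c2 g).
  by rewrite -big_split /=; apply: eq_bigr => g _; rewrite mulrDl.
- move=> c u /hasP [g gS hgu].
  exists (fun g' => if g' == g then c *: 'X_[u - g] else 0).
  rewrite (bigD1_seq g) //= eqxx big1 ?addr0.
    by rewrite -scalerAl -mpolyXD submK.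
  by move=> g' /negbTE ->; rewrite mul0r.
Qed.

Lemma mcoeffMXg (k : fieldType) n (p : {mpoly k[n]}) (m u : 'X_{1..n}) :
  (p * 'X_[m])@_u = if (m <= u)%MM then p@_(u - m) else 0.
Proof.
case: ifP => hmu.
  by rewrite -{1}(submK hmu) addmC mcoeffMX.
apply: memN_msupp_eq0; rewrite (perm_mem (msuppMX _ _)).
by apply/mapP => [[m' _ hu]]; move: hmu; rewrite hu lem_addr.
Qed.

Lemma monI_colon (k : fieldType) n (S : seq 'X_{1..n}) (x : 'I_n) (s : {mpoly k[n]}) :
  monI S (('X_x - 1) * s) -> monI S s.
Proof.
move=> hs u0 hu0; apply/negPn/negP => bad0.
pose P := fun j : nat => has (fun u : 'X_{1..n} => (u x == j) && ~~ has (fun g => (g <= u)%MM) S) (msupp s).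
have exP : exists j, P j by exists (u0 x); apply/hasP; exists u0 => //; rewrite eqxx.
case: (ex_minnP exP) => j0 /hasP [u hu /andP [/eqP hux bad]] minj.
have hc : (s * 'X_x)@_u = 0.
  rewrite mcoeffMXg; case: ifP => // hUu.
  apply: memN_msupp_eq0; apply/negP => hv.
  have hux1 : (0 < u x)%N by move: hUu; rewrite lep1mP lt0n.
  have : P (u x).-1.
    apply/hasP; exists (u - U_(x))%MM => //.
    rewrite mnmBE mnm1E eqxx subn1 eqxx /=.
    apply: contra bad => /hasP [g gS hg]; apply/hasP; exists g => //.
    by apply: lepm_trans hg (lem_subr _ _).
  move/minj; rewrite -hux; case: (u x) hux1 => // j _; rewrite /= ltnn.
  done.
have : u \in msupp (('X_x - 1) * s).
  by rewrite mcoeff_msupp mulrBl mul1r mcoeffB mulrC hc sub0r oppr_eq0 -mcoeff_msupp.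
by move/hs; apply/negP.
Qed.

Definition lqx (k : fieldType) n (x : 'I_n) : n.-tuple {mpoly k[n]} :=
  [tuple (if i == x then 1 else 'X_i) | i < n].
Arguments lqx {k n} x.
Notation psix x := (comp_mpoly (lqx x)).

Lemma psixX (k : fieldType) n (x : 'I_n) (m : 'X_{1..n}) :
  psix x ('X_[m] : {mpoly k[n]}) = 'X_[set_var1 x m].
Proof.
rewrite comp_mpolyX [RHS]mpolyXE_id; apply: eq_bigr => i _.
rewrite tnth_mktuple mnmE; case: eqP => _; first by rewrite expr1n expr0.
by [].
Qed.

Lemma psixE (k : fieldType) n (x : 'I_n) (p : {mpoly k[n]}) :
  psix x p = \sum_(m <- msupp p) p@_m *: 'X_[set_var1 x m].
Proof. by rewrite comp_mpolyEX; apply: eq_bigr => m _; rewrite psixX. Qed.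

Lemma set_var1_idem n (x : 'I_n) (m : 'X_{1..n}) :
  set_var1 x (set_var1 x m) = set_var1 x m.
Proof. by apply/mnmP => i; rewrite !mnmE; case: eqP. Qed.

Lemma psix_idem (k : fieldType) n (x : 'I_n) (p : {mpoly k[n]}) :
  psix x (psix x p) = psix x p.
Proof.
rewrite (psixE x p) raddf_sum; apply: eq_bigr => m _.
apply: (etrans (comp_mpolyZ _ _ _)); by rewrite psixX set_var1_idem.
Qed.

Lemma psix_Xx (k : fieldType) n (x : 'I_n) :
  psix x ('X_x : {mpoly k[n]}) = 1.
Proof.
rewrite psixX; have -> : set_var1 x U_(x)%MM = 0%MM.
  by apply/mnmP => i; rewrite !mnmE; case: eqP => // /eqP; rewrite eq_sym => /negbTE ->.
by rewrite mpolyX0.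
Qed.

Lemma psix_fix (k : fieldType) n (x : 'I_n) (p : {mpoly k[n]}) :
  (forall m, m \in msupp p -> m x = 0%N) -> psix x p = p.
Proof.
move=> h; rewrite psixE [in RHS](mpolyE p); apply: eq_big_seq => m /h hm.
congr (_ *: 'X_[_]); apply/mnmP => i; rewrite mnmE; case: eqP => // ->.
by rewrite hm.
Qed.

Definition Dx (k : fieldType) n (x : 'I_n) (p : {mpoly k[n]}) : {mpoly k[n]} :=
  \sum_(m <- msupp p) p@_m *: ('X_[set_var1 x m] * \sum_(j < m x) 'X_[U_(x) *+ j]).

Lemma geomX (k : fieldType) n (x : 'I_n) (K : nat) :
  ('X_x - 1) * \sum_(j < K) 'X_[U_(x) *+ j] = 'X_[U_(x) *+ K] - 1 :> {mpoly k[n]}.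
Proof.
elim: K => [|K IH]; first by rewrite big_ord0 mulr0 mulm0n mpolyX0 subrr.
rewrite big_ord_recr /= mulrDr IH mulrBl mul1r -mpolyXD -mulmS.
by rewrite addrC addrA subrK.
Qed.

Lemma set_var1_add n (x : 'I_n) (m : 'X_{1..n}) :
  (set_var1 x m + U_(x) *+ m x)%MM = m.
Proof.
apply/mnmP => i; rewrite mnmDE mulmnE mnm1E !mnmE.
by case: eqP => [->|]; rewrite ?eqxx ?mul1n ?add0n // => /eqP; rewrite eq_sym => /negbTE ->; rewrite mul0n addn0.
Qed.

Lemma DxE (k : fieldType) n (x : 'I_n) (p : {mpoly k[n]}) :
  p - psix x p = ('X_x - 1) * Dx x p.
Proof.
rewrite psixE {1}(mpolyE p) -sumrB /Dx mulr_sumr; apply: eq_bigr => m _.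
rewrite -scalerAr -scalerBr; congr (_ *: _).
rewrite mulrCA geomX mulrBr mulr1 -mpolyXD set_var1_add //.
Qed.

Lemma Dx_supp (k : fieldType) n (x : 'I_n) (p : {mpoly k[n]}) N :
  (forall m, m \in msupp p -> (m x <= N.+1)%N) ->
  forall u, u \in msupp (Dx x p) -> (u x <= N)%N.
Proof.
move=> h u /msupp_sum_le /flattenP [s /mapP [m]].
rewrite mem_filter /= => hm -> /msuppZ_le.
rewrite mulrC (perm_mem (msuppMX _ _)) => /mapP [u' /msupp_sum_le /flattenP [s' /mapP [j _ ->]]].
rewrite msuppX mem_seq1 => /eqP -> ->.
rewrite mnmDE mulmnE mnm1E !mnmE eqxx mul1n add0n.
by rewrite -ltnS; apply: leq_trans (ltn_ord j) (h _ hm).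
Qed.

Lemma monI_psix (k : fieldType) n (x : 'I_n) (S : seq 'X_{1..n}) (p : {mpoly k[n]}) :
  monI S p -> monI (map (set_var1 x) S) (psix x p).
Proof.
move=> hp u; rewrite psixE => /msupp_sum_le /flattenP [s /mapP [m]].
rewrite mem_filter /= => hm -> /msuppZ_le; rewrite msuppX mem_seq1 => /eqP ->.
case/hasP: (hp _ hm) => g gS hg; apply/hasP; exists (set_var1 x g).
  by apply: map_f.
apply/mnm_lepP => i; rewrite !mnmE; case: eqP => // _.
by move/mnm_lepP: hg; apply.
Qed.

Lemma Xx1_neq0 (k : fieldType) n (x : 'I_n) : ('X_x - 1 : {mpoly k[n]}) != 0.
Proof.
apply/eqP => h; have := congr1 (mcoeff U_(x)) h.
rewrite mcoeffB mcoeffX eqxx mcoeff1 mcoeff0 mnm1_eq0 subr0 => /eqP.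
by rewrite oner_eq0.
Qed.

Lemma psix_Xx1 (k : fieldType) n (x : 'I_n) :
  psix x ('X_x - 1 : {mpoly k[n]}) = 0.
Proof. by rewrite comp_mpolyB comp_mpoly1 psix_Xx subrr. Qed.

Lemma mxDx (k : fieldType) n (x : 'I_n) p q (A : 'M[{mpoly k[n]}]_(p, q)) :
  A - map_mx (psix x) A = ('X_x - 1) *: map_mx (Dx x) A.
Proof. by apply/matrixP => i j; rewrite !mxE DxE. Qed.

Lemma map_psix_idem (k : fieldType) n (x : 'I_n) p q (A : 'M[{mpoly k[n]}]_(p, q)) :
  map_mx (psix x) (map_mx (psix x) A) = map_mx (psix x) A.
Proof. by apply/matrixP => i j; rewrite !mxE psix_idem. Qed.

Definition xbound (k : fieldType) n (x : 'I_n) (N : nat) p q (A : 'M[{mpoly k[n]}]_(p, q)) :=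
  forall i j m, m \in msupp (A i j) -> (m x <= N)%N.

Lemma xbound_ex (k : fieldType) n (x : 'I_n) p q (A : 'M[{mpoly k[n]}]_(p, q)) :
  exists N, xbound x N A.
Proof.
exists (\max_(i < p) \max_(j < q) \max_(m <- msupp (A i j)) m x)%N.
move=> i j m hm; apply: leq_trans (@leq_bigmax_seq _ _ (fun _ => true) (fun m : 'X_{1..n} => m x) m hm isT) _.
apply: (bigmax_sup i) => //; exact: (bigmax_sup j).
Qed.

Lemma psix_fixmx (k : fieldType) n (x : 'I_n) p q (A : 'M[{mpoly k[n]}]_(p, q)) :
  xbound x 0 A -> map_mx (psix x) A = A.
Proof.
move=> h; apply/matrixP => i j; rewrite mxE psix_fix // => m /h.
by rewrite leqn0 => /eqP.
Qed.

Lemma Dx_bound (k : fieldType) n (x : 'I_n) N p q (A : 'M[{mpoly k[n]}]_(p, q)) :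
  xbound x N.+1 A -> xbound x N (map_mx (Dx x) A).
Proof. by move=> h i j m; rewrite mxE; apply: Dx_supp; apply: h. Qed.

Lemma onevar (k : fieldType) n (x : 'I_n) (S : seq 'X_{1..n}) L :
  cres (monI (k := k) S) L -> cres (monI (k := k) (map (set_var1 x) S)) L.
Proof.
case=> b [D [hb [hI hE]]].
have hC := exact_comp hE.
pose D' := fun i => map_mx (psix x) (D i).
exists b, D'; split => //; split.
  move=> f; split.
    apply: (monI_ind (P := fun f => exists v, f = (v *m D' 0%N) 0 0)).
    - by exists 0; rewrite mul0mx mxE.
    - by move=> p q [v1 ->] [v2 ->]; exists (v1 + v2); rewrite mulmxDl [RHS]mxE.
    move=> c u /hasP [g' /mapP [g gS ->] hg].
    have hXg : monI S ('X_[g] : {mpoly k[n]}).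
      by rewrite -[X in monI _ X]mul1r; apply: monIXM.
    case/hI: hXg => w hw.
    exists ((c *: 'X_[u - set_var1 x g]) *: map_mx (psix x) w).
    rewrite -scalemxAl mxE -map_mxM mxE -hw /= psixX -scalerAl -mpolyXD submK //.
  case=> v ->; rewrite mxE; apply: monI_sum => j; apply: monIM.
  rewrite /D' mxE; apply: monI_psix; apply/hI; exists (delta_mx 0 j).
  by rewrite -rowE mxE.
have hT : forall i (u : 'rV_(Bof b i)), (exists v, ('X_x - 1) *: u = v *m D i) ->
    exists u', u = u' *m D i.
  case=> [|j] u [v hv].
    have : monI S (('X_x - 1) * u 0 0).
      by apply/hI; exists v; rewrite -hv mxE.
    by case/monI_colon/hI => u' hu'; exists u'; apply: m11P.
  have : u *m D j = 0.
    apply/eqP; have := Xx1_neq0 k x; apply: contraNT => hn.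
    rewrite -[_ == 0](orbF) -(negbTE hn) -scalemx_eq0 scalemxAl hv -mulmxA hC.
    by rewrite mulmx0.
  by case/(hE j) => u' hu'; exists u'.
have hS0 : forall i (v : 'rV_(Bof b i.+1)), map_mx (psix x) v = v ->
    v *m D' i = 0 -> exists w, v = w *m D' i.+1.
  move=> i v hv h0; set Dl := map_mx (Dx x) (D i).
  have e1 : v *m D i = ('X_x - 1) *: (v *m Dl).
    have -> : D i = D' i + ('X_x - 1) *: Dl by rewrite -mxDx addrC subrK.
    by rewrite mulmxDr h0 add0r scalemxAr.
  have [u' hu'] := hT i (v *m Dl) (ex_intro _ v (esym e1)).
  have : (v - ('X_x - 1) *: u') *m D i = 0.
    by rewrite mulmxBl e1 -scalemxAl -hu' subrr.
  case/(hE i) => w hw; exists (map_mx (psix x) w).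
  have := congr1 (map_mx (psix x)) hw.
  by rewrite map_mxB map_mxZ /= psix_Xx1 scale0r subr0 hv map_mxM.
have hC' : forall i, D' i.+1 *m D' i = 0.
  by move=> i; rewrite /D' -map_mxM hC map_mx0.
have hpsi : forall i (v : 'rV_(Bof b i.+1)), v *m D' i = 0 ->
    exists w, map_mx (psix x) v = w *m D' i.+1.
  move=> i v h0; apply: hS0; first exact: map_psix_idem.
  have := congr1 (map_mx (psix x)) h0; rewrite map_mxM map_mx0 /D' /= map_psix_idem.
  done.
have hgen : forall N i (v : 'rV_(Bof b i.+1)), xbound x N v ->
    v *m D' i = 0 -> exists w, v = w *m D' i.+1.
  elim=> [|N IH] i v hN h0; have [w1 hw1] := hpsi i v h0.
    by exists w1; rewrite -hw1 psix_fixmx.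
  set v' := map_mx (Dx x) v.
  have hv' : xbound x N v' by apply: Dx_bound.
  have h0' : v' *m D' i = 0.
    apply/eqP; have := Xx1_neq0 k x; apply: contraNT => hn.
    rewrite -[_ == 0](orbF) -(negbTE hn) -scalemx_eq0 scalemxAl.
    by rewrite -mxDx mulmxBl h0 hw1 -mulmxA hC' mulmx0 subrr.
  have [w2 hw2] := IH i v' hv' h0'.
  exists (w1 + ('X_x - 1) *: w2).
  by rewrite mulmxDl -scalemxAl -hw1 -hw2 -mxDx addrC subrK.
move=> i v; split; last first.
  by case=> w ->; rewrite -mulmxA /D' -map_mxM hC map_mx0 mulmx0.
by have [N hN] := xbound_ex x v; apply: hgen hN.
Qed.

Lemma itervar (k : fieldType) n (xs : seq 'I_n) (S : seq 'X_{1..n}) L :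
  cres (monI (k := k) S) L ->
  cres (monI (k := k)
    (map (fun m : 'X_{1..n} => [multinom (if i \in xs then 0%N else m i) | i < n]) S)) L.
Proof.
elim: xs => [|x xs IH] h.
  rewrite (@eq_map _ _ _ id) ?map_id // => m; apply/mnmP => i.
  by rewrite mnmE ?in_nil.
have := onevar x (IH h); rewrite -map_comp.
congr (cres (monI _) _); apply: eq_map => m /=; apply/mnmP => i.
rewrite !mnmE in_cons; case: eqP => //.
Qed.

Lemma mon_monI (k : fieldType) n (S : seq 'X_{1..n}) (f : {mpoly k[n]}) :
  uniq S -> mon_ideal S f <-> monI S f.
Proof.
by move=> uS; split; [apply: mon_ideal_monI | apply: monI_mon_ideal].
Qed.

Lemma monI_sub (k : fieldType) n (S T : seq 'X_{1..n}) (f : {mpoly k[n]}) :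
  {subset S <= T} -> monI S f -> monI T f.
Proof.
move=> hST hf u /hf /hasP [g gS hg]; apply/hasP; exists g => //; exact: hST.
Qed.

Theorem theorem4p6 (k : fieldType) (n : nat) (G : seq 'X_{1..n})
    (h : 'X_{1..n}) :
  is_min_gen_set G ->
  nearly_CI G ->
  h \in G ->
  (3 <= mdeg h)%N ->
  forall L : nat,
    pdim_le (mon_ideal (k := k) [seq g <- G | g != h]) L ->
    pdim_le (mon_ideal (k := k) G) L.+1.
Proof.
move=> hmin hnci hG _ L hK.
case/andP: hmin => uG _; case: hnci => sqf _.
set K := [seq g <- G | g != h].
have uK : uniq K := filter_uniq _ uG.
have KG : {subset K <= G} by move=> g; rewrite mem_filter => /andP [].
have cK : cres (monI (k := k) K) L.
  by apply: cres_ext ((free_cres _ _).1 hK) => f; apply: mon_monI.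
set xs := [seq i <- enum 'I_n | (0 < h i)%N].
have cJ := itervar xs cK.
have cI : cres (monI (k := k) G) L.+1.
  apply: (cone (hX := 'X_[h]) cK cJ).
  - move=> p hp u; rewrite (perm_mem (msuppMX _ _)) => /mapP [u' hu' ->].
    case/hasP: (hp _ hu') => g' /mapP [g gK ->] hg.
    apply/hasP; exists g => //; apply/mnm_lepP => i; rewrite mnmDE.
    move/mnm_lepP: hg => /(_ i); rewrite mnmE mem_filter mem_enum andbT.
    case: ifP => hi hg.
      have sg : (g i <= 1)%N.
        by move/allP: sqf => /(_ g (KG _ gK)) /forallP /(_ i).
      by apply: leq_trans sg (leq_trans hi (leq_addr _ _)).
    by apply: leq_trans hg (leq_addl _ _).
  - move=> r hr u hu.
    have : (h + u)%MM \in msupp (r * 'X_[h]).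
      by rewrite mcoeff_msupp mcoeffMX -mcoeff_msupp.
    move/hr => /hasP [g gK hg].
    apply/hasP; eexists; first by apply: map_f gK.
    apply/mnm_lepP => i; rewrite mnmE; case: ifP => // hi.
    move/mnm_lepP: hg => /(_ i); rewrite mnmDE.
    move: hi; rewrite mem_filter mem_enum andbT lt0n => /negbT; rewrite negbK => /eqP ->.
    by rewrite add0n.
  - move=> f; split.
      apply: (monI_ind (P := fun f => exists a r, monI K a /\ f = a + r * 'X_[h])).
      + by exists 0, 0; split; [apply: monI0 | rewrite mul0r addr0].
      + move=> p q [a1 [r1 [h1 ->]]] [a2 [r2 [h2 ->]]].
        exists (a1 + a2), (r1 + r2); split; first by apply: monID.
        by rewrite mulrDl addrACA.
      + move=> c u /hasP [g gG hg]; case: (eqVneq g h) => [eg|ne].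
          exists 0, (c *: 'X_[u - h]); split; first by apply: monI0.
          by rewrite add0r -scalerAl -mpolyXD submK // -eg.
        exists (c *: 'X_[u]), 0; split; last by rewrite mul0r addr0.
        by apply: monIX; apply/hasP; exists g => //; rewrite mem_filter ne.
    case=> a [r [ha ->]]; apply: monID; first by apply: monI_sub ha.
    exact: monIXM.
apply/free_cres; apply: cres_ext cI => f; rewrite mon_monI //.
Qed.
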